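(* Let $(H_1,+_1,\circ_1)$ and $(H_2,+_2,\circ_2)$ be commutative multiplicative hyperrings with identities $1_{H_1},1_{H_2}$, and let $P_1$ and $P_2$ be nonzero proper strong $\mathcal{C}$-hyperideals of $H_1$ and $H_2$, respectively. Then $P_1\times P_2$ is an sdf-absorbing hyperideal of $H_1\times H_2$ if and only if $P_1$ and $P_2$ are sdf-absorbing hyperideals of $H_1$ and $H_2$, respectively, and $1_{H_1}+1_{H_1}\in P_1$ or $1_{H_2}+1_{H_2}\in P_2$.
   Context: A commutative multiplicative hyperring $(H,+,\circ)$ consists of an abelian group $(H,+)$ and an associative, commutative hyperoperation $\circ: H\times H\to P^*(H)$ with $x\circ(y+z)\subseteq x\circ y+x\circ z$ and $x\circ(-y)=-(x\circ y)=(-x)\circ y$. For subsets $A,B$, $A\circ B=\bigcup_{a\in A,b\in B}a\circ b$, $A\pm B=\{a\pm b\}$; $x^2=x\circ x$. Identity: $x\in x\circ 1$ for all $x$. $H_1\times H_2$ is the hyperring with $(x_1,x_2)+(y_1,y_2)=(x_1+_1y_1,x_2+_2y_2)$ and $(x_1,x_2)\circ(y_1,y_2)=\{(a,b): a\in x_1\circ_1y_1, b\in x_2\circ_2y_2\}$. A hyperideal is a nonempty $P$ with $x-y\in P$ and $r\circ x\subseteq P$ for $x,y\in P$, $r\in H$. Let $\mathcal{C}=\{c_1\circ\cdots\circ c_n: c_i\in H\}$ and $\mathfrak{C}=\{\sum_{i=1}^m C_i: C_i\in\mathcal{C}\}$; $P$ is a strong $\mathcal{C}$-hyperideal if for every $D\in\mathfrak{C}$,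 $D\cap P\neq\varnothing$ implies $D\subseteq P$. A proper hyperideal $P$ is sdf-absorbing if whenever $x,y$ are nonzero and $x^2-y^2\subseteq P$, then $x-y\in P$ or $x+y\in P$. *)

(* Defs.v *)
From mathcomp Require Import all_boot all_algebra.
Set Implicit Arguments. Unset Strict Implicit. Unset Printing Implicit Defensive.
Import GRing.Theory.
Local Open Scope ring_scope.

(* A hyperoperation on H is encoded as a ternary relation:
   [hm x y z] means  z \in x o y. Subsets of H are predicates H -> Prop. *)
Definition hyperop (H : Type) := H -> H -> H -> Prop.

Section Hyperring.
Variables (H : zmodType) (hm : hyperop H).

Record is_cm_hyperring : Prop := IsCMHyperring {
  hm_nonempty : forall x y, exists z, hm x y z;
  hm_assoc : forall x y z w,
    (exists a, hm y z a /\ hm x a w) <-> (exists a, hm x y a /\ hm a z w);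
  hm_comm : forall x y z, hm x y z <-> hm y x z;
  hm_distr : forall x y z w, hm x (y + z) w ->
    exists a b, hm x y a /\ hm x z b /\ w = a + b;
  hm_oppr : forall x y w, hm x (- y) w <-> hm x y (- w);
  hm_oppl : forall x y w, hm (- x) y w <-> hm x y (- w)
}.

Definition is_identity (one : H) : Prop := forall x, hm x one x.

Definition is_hyperideal (P : H -> Prop) : Prop :=
  (exists x, P x) /\
  (forall x y, P x -> P y -> P (x - y)) /\
  (forall r x z, P x -> hm r x z -> P z).

Definition proper_set (P : H -> Prop) : Prop := exists x, ~ P x.
Definition nonzero_set (P : H -> Prop) : Prop := exists x, P x /\ x <> 0.

(* c_1 o c_2 o ... o c_n for the list [c_1; ...; c_n], n >= 1 *)
Fixpoint hprod (c : H) (s : seq H) : H -> Prop :=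
  match s with
  | [::] => fun z => z = c
  | d :: s' => fun z => exists a, hprod d s' a /\ hm c a z
  end.

(* C_1 + ... + C_m for the list of C_i (each given by a nonempty list), m >= 1 *)
Fixpoint hsum (C : H * seq H) (Cs : seq (H * seq H)) : H -> Prop :=
  match Cs with
  | [::] => hprod C.1 C.2
  | D :: Cs' => fun z => exists a b,
      hprod C.1 C.2 a /\ hsum D Cs' b /\ z = a + b
  end.

Definition strong_C_hyperideal (P : H -> Prop) : Prop :=
  is_hyperideal P /\
  forall C Cs, (exists d, hsum C Cs d /\ P d) -> forall d, hsum C Cs d -> P d.

Definition sq_diff (x y : H) : H -> Prop :=
  fun z => exists a b, hm x x a /\ hm y y b /\ z = a - b.

Definition sdf_absorbing (P : H -> Prop) : Prop :=
  is_hyperideal P /\ proper_set P /\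
  forall x y, x <> 0 -> y <> 0 ->
    (forall z, sq_diff x y z -> P z) -> P (x - y) \/ P (x + y).

End Hyperring.

Definition prod_hm (H1 H2 : zmodType) (m1 : hyperop H1) (m2 : hyperop H2)
  : hyperop (H1 * H2)%type :=
  fun x y z => m1 x.1 y.1 z.1 /\ m2 x.2 y.2 z.2.

Definition prod_set (H1 H2 : Type) (P1 : H1 -> Prop) (P2 : H2 -> Prop)
  : (H1 * H2)%type -> Prop := fun z => P1 z.1 /\ P2 z.2.

(* Main.v *)
Require Import Defs.
From mathcomp Require Import all_boot all_algebra.
Import GRing.Theory.
Local Open Scope ring_scope.
Set Implicit Arguments. Unset Strict Implicit.

Section Aux.
Variables (H : zmodType) (hm : hyperop H).
Hypothesis R : is_cm_hyperring hm.

Lemma hi0 P : is_hyperideal hm P -> P 0.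
Proof. move=> [[x Px] [B _]]. by have := B x x Px Px; rewrite subrr. Qed.

Lemma hiN P x : is_hyperideal hm P -> P x -> P (- x).
Proof.
move=> hP Px; have := hi0 hP; case: hP => _ [B _] P0.
by have := B 0 x P0 Px; rewrite sub0r.
Qed.

Lemma hiB P x y : is_hyperideal hm P -> P x -> P y -> P (x - y).
Proof. by move=> [_ [B _]]; apply: B. Qed.

Lemma hiD P x y : is_hyperideal hm P -> P x -> P y -> P (x + y).
Proof.
move=> hP Px Py; have := hiB hP Px (hiN hP Py); by rewrite opprK.
Qed.

Lemma hiM P r x z : is_hyperideal hm P -> P x -> hm r x z -> P z.
Proof. by move=> [_ [_ M]]; apply: M. Qed.

Lemma sq_in P u : sdf_absorbing hm P -> nonzero_set P ->
  (forall a, hm u u a -> P a) -> P u.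
Proof.
move=> [hP [_ S]] [p [Pp p0]] Hu.
case: (eqVneq u 0) => [->|u0]; first exact: hi0 hP.
have : P (u - p) \/ P (u + p).
  apply: S => //; first by apply/eqP.
  move=> z [a [b [ha [hb ->]]]]; apply: hiB => //; first exact: Hu.
  exact: hiM hP Pp hb.
case=> h.
  by have := hiD hP h Pp; rewrite subrK.
by have := hiB hP h Pp; rewrite addrK.
Qed.

Lemma sdf_all P x y : sdf_absorbing hm P -> nonzero_set P ->
  (forall z, sq_diff hm x y z -> P z) -> P (x - y) \/ P (x + y).
Proof.
move=> hS nz Hxy; have hP := hS.1.
have [c hc] := hm_nonempty R 0 0.
have Pc : P c by apply: hiM hP (hi0 hP) hc.
case: (eqVneq x 0) => [x0|xn0].
  left; rewrite x0 sub0r; apply: hiN => //; apply: sq_in => // b hb.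
  have := Hxy (c - b); rewrite x0 => /(_ (ex_intro _ c (ex_intro _ b (conj hc (conj hb erefl))))).
  by move=> h; have := hiB hP Pc h; rewrite opprB addrC subrK.
case: (eqVneq y 0) => [y0|yn0].
  left; rewrite y0 subr0; apply: sq_in => // a ha.
  have := Hxy (a - c); rewrite y0 => /(_ (ex_intro _ a (ex_intro _ c (conj ha (conj hc erefl))))).
  by move=> h; have := hiD hP h Pc; rewrite subrK.
by case: hS => _ [_ S]; apply: S => //; apply/eqP.
Qed.

Lemma strong_sq P x y : strong_C_hyperideal hm P ->
  (exists d, sq_diff hm x y d /\ P d) -> forall d, sq_diff hm x y d -> P d.
Proof.
move=> [_ S] [d0 [hd0 Pd0]] d hd.
have E : forall z, sq_diff hm x y z -> hsum hm (x, [:: x]) [:: (- y, [:: y])] z.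
  move=> z [a [b [ha [hb ->]]]]; exists a, (- b); split.
    by exists x.
  split=> //; exists y; split=> //; apply/(hm_oppl R); by rewrite opprK.
apply: (S _ _ _ d (E _ hd)); exists d0; split => //; exact: E.
Qed.

Lemma two_in P one u : strong_C_hyperideal hm P -> is_identity hm one ->
  P (one + one) -> P (u + u).
Proof.
move=> [hP S] hone P2.
have [w hw] := hm_nonempty R u (one + one).
have Pw : P w by apply: hiM hP P2 hw.
have [a [b [ha [hb ew]]]] := hm_distr R hw.
apply: (S (u, [:: one]) [:: (u, [:: one])]).
  exists w; split => //; exists a, b; split; first by exists one.
  split => //; by exists one.
exists u, u; split; first by exists one; split => //; apply: hone.
split => //; by exists one; split => //; apply: hone.
Qed.

Lemma one_notin P one : is_hyperideal hm P -> proper_set P ->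
  is_identity hm one -> ~ P one.
Proof.
move=> hP [x nx] hone P1; apply: nx; exact: hiM hP P1 (hone x).
Qed.

Lemma one_neq0 P one : is_hyperideal hm P -> proper_set P ->
  is_identity hm one -> one != 0.
Proof.
move=> hP pr hone; apply/eqP => e; apply: (one_notin hP pr hone).
rewrite e; exact: hi0.
Qed.

Lemma sq_one P one a b : strong_C_hyperideal hm P -> hm one one a ->
  hm one one b -> P (a - b).
Proof.
move=> sP ha hb; apply: (strong_sq (x:=one) (y:=one) sP); last by exists a, b.
have [c hc] := hm_nonempty R one one.
exists (c - c); split; first by exists c, c.
rewrite subrr; exact: hi0 sP.1.
Qed.

End Aux.

Theorem mainTheorem14 (H1 H2 : zmodType) (m1 : hyperop H1) (m2 : hyperop H2)
  (one1 : H1) (one2 : H2) (P1 : H1 -> Prop) (P2 : H2 -> Prop) :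
  is_cm_hyperring m1 -> is_cm_hyperring m2 ->
  is_identity m1 one1 -> is_identity m2 one2 ->
  nonzero_set P1 -> proper_set P1 -> strong_C_hyperideal m1 P1 ->
  nonzero_set P2 -> proper_set P2 -> strong_C_hyperideal m2 P2 ->
  (sdf_absorbing (prod_hm m1 m2) (prod_set P1 P2) <->
   (sdf_absorbing m1 P1 /\ sdf_absorbing m2 P2 /\
    (P1 (one1 + one1) \/ P2 (one2 + one2)))).
Proof.
move=> R1 R2 i1 i2 nz1 pr1 s1 nz2 pr2 s2.
have h1 := s1.1; have h2 := s2.1.
split.
- move=> [hP [prP S]]; split; last split.
  + split => //; split => // x y x0 y0 Hxy.
    have := S (x, 0) (y, 0).
    have nz : forall u : H1, u <> 0 -> ((u, 0) : (H1 * H2)%type) <> 0.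
      by move=> u u0 /(congr1 fst) /=.
    case/(_ (nz _ x0) (nz _ y0)).
    * move=> z [a [b [[ha1 ha2] [[hb1 hb2] ->]]]]; simpl in *; split => /=.
        by apply: Hxy; exists a.1, b.1.
      exact: hiB h2 (hiM h2 (hi0 h2) ha2) (hiM h2 (hi0 h2) hb2).
    * by case=> /= ? _; left.
    * by case=> /= ? _; right.
  + split => //; split => // x y x0 y0 Hxy.
    have := S (0, x) (0, y).
    have nz : forall u : H2, u <> 0 -> ((0, u) : (H1 * H2)%type) <> 0.
      by move=> u u0 /(congr1 snd) /=.
    case/(_ (nz _ x0) (nz _ y0)).
    * move=> z [a [b [[ha1 ha2] [[hb1 hb2] ->]]]]; simpl in *; split => /=; last first.
        by apply: Hxy; exists a.2, b.2.
      exact: hiB h1 (hiM h1 (hi0 h1) ha1) (hiM h1 (hi0 h1) hb1).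
    * by case=> /= _ ?; left.
    * by case=> /= _ ?; right.
  + have o1 := one_neq0 h1 pr1 i1; have o2 := one_neq0 h2 pr2 i2.
    have := S (one1, one2) (one1, - one2).
    have nzx : ((one1, one2) : (H1 * H2)%type) <> 0.
      by move=> /(congr1 fst) /= e; rewrite e eqxx in o1.
    have nzy : ((one1, - one2) : (H1 * H2)%type) <> 0.
      by move=> /(congr1 fst) /= e; rewrite e eqxx in o1.
    case/(_ nzx nzy).
    * move=> z [a [b [[ha1 ha2] [[hb1 hb2] ->]]]]; simpl in *; split => /=.
        exact (sq_one R1 s1 ha1 hb1).
      refine (sq_one R2 s2 ha2 _).
      move: hb2 => /= /(hm_oppl R2) /(hm_oppr R2); by rewrite opprK.
    * by case=> /= _; rewrite opprK; right.
    * by case=> /= ? _; left.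
- move=> [sd1 [sd2 two]]; split; last split.
  + split; first by case: h1.1 => a ?; case: h2.1 => b ?; exists (a, b).
    split.
      move=> x y [a1 a2] [b1 b2]; split; [exact (hiB h1 a1 b1) | exact (hiB h2 a2 b2)].
    move=> r x z [a1 a2] [b1 b2]; split; [exact (hiM h1 a1 b1) | exact (hiM h2 a2 b2)].
  + by case: pr1 => a na; exists (a, 0); case.
  + move=> x y _ _ Hxy.
    have H1s : forall z, sq_diff m1 x.1 y.1 z -> P1 z.
      move=> z [a [b [ha [hb ->]]]].
      have [c hc] := hm_nonempty R2 x.2 x.2; have [d hd] := hm_nonempty R2 y.2 y.2.
      have := Hxy ((a, c) - (b, d)); case => //.
      by exists (a, c), (b, d).
    have H2s : forall z, sq_diff m2 x.2 y.2 z -> P2 z.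
      move=> z [a [b [ha [hb ->]]]].
      have [c hc] := hm_nonempty R1 x.1 x.1; have [d hd] := hm_nonempty R1 y.1 y.1.
      have := Hxy ((c, a) - (d, b)); case => //.
      by exists (c, a), (d, b).
    have A1 := sdf_all R1 sd1 nz1 H1s; have A2 := sdf_all R2 sd2 nz2 H2s.
    case: two => [t1|t2].
    * have B1 : P1 (x.1 - y.1) /\ P1 (x.1 + y.1).
        have Y := two_in R1 y.1 s1 i1 t1.
        case: A1 => h; split => //.
          by have := hiD h1 h Y; rewrite addrA subrK.
        by have := hiB h1 h Y; rewrite -addrA opprD addNKr.
      case: A2 => h; [left|right]; split; by case: B1.
    * have B2 : P2 (x.2 - y.2) /\ P2 (x.2 + y.2).
        have Y := two_in R2 y.2 s2 i2 t2.
        case: A2 => h; split => //.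
          by have := hiD h2 h Y; rewrite addrA subrK.
        by have := hiB h2 h Y; rewrite -addrA opprD addNKr.
      case: A1 => h; [left|right]; split; by case: B2.
Qed.
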